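(* Let $FO_{j,2}(\alpha,\lambda,n)$ be the number of partitions with perimeter $n$, largest part $\alpha$, exactly $\lambda$ parts, and exactly $j$ distinct even part sizes. Then, as formal power series, $$\sum_{\alpha,\lambda,n\geq 1}\sum_{j\geq 0} FO_{j,2}(\alpha,\lambda,n)\,x^\alpha y^\lambda z^j q^n=\frac{xyq\,(1-(y-xz)q)}{1-2yq+(y^2-x^2)q^2+(1-z)x^2yq^3}.$$
   Context: A partition is a finite nonincreasing sequence of positive integers (its parts); its size is not fixed. For a partition $\pi$ with largest part $\alpha(\pi)$ and number of parts $\lambda(\pi)$, its perimeter is $\alpha(\pi)+\lambda(\pi)-1$. (Note $FO_{j,2}(\alpha,\lambda,n)=0$ unless $n=\alpha+\lambda-1$.) *)

(* Defs.v *)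
From mathcomp Require Import all_boot all_order all_algebra.
Set Implicit Arguments. Unset Strict Implicit. Unset Printing Implicit Defensive.
Import GRing.Theory Num.Theory.

Definition is_partition (s : seq nat) : bool :=
  sorted geq s && all (fun k => 0 < k) s.
Definition largest_part (s : seq nat) : nat := \max_(k <- s) k.
Definition num_parts (s : seq nat) : nat := size s.
Definition perimeter (s : seq nat) : nat := largest_part s + num_parts s - 1.
Definition num_even_sizes (s : seq nat) : nat :=
  size (undup (filter (fun k => ~~ odd k) s)).

(* A partition with largest
   part a and l parts is exactly (the image under val of) an l-tuple over
   'I_a.+1 satisfying the conditions; map val is injective. *)
Definition FO2 (j a l n : nat) : nat :=
  #|[pred t : l.-tuple 'I_a.+1 |
      let s := map val t in
      [&& is_partition s, largest_part s == a, perimeter s == n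
        & num_even_sizes s == j]]|.

Local Open Scope ring_scope.

(* Formal power series in x, y, z, q with integer coefficients:
   f a b c d = coefficient of x^a y^b z^c q^d. *)
Definition fps := nat -> nat -> nat -> nat -> int.

Definition fps_add (f g : fps) : fps := fun a b c d => f a b c d + g a b c d.

Definition fps_mul (f g : fps) : fps := fun a b c d =>
  \sum_(i < a.+1) \sum_(k < b.+1) \sum_(m < c.+1) \sum_(p < d.+1)
     f i k m p * g (a - i)%N (b - k)%N (c - m)%N (d - p)%N.

Definition mono (e : int) (i k m p : nat) : fps := fun a b c d =>
  if [&& a == i, b == k, c == m & d == p] then e else 0.

Definition fps_one : fps := mono 1 0 0 0 0.

Definition FO2_gf : fps := fun a l j n =>
  if [&& (0 < a)%N, (0 < l)%N & (0 < n)%N] then (FO2 j a l n)%:Z else 0.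

(* numerator  x y q (1 - (y - x z) q) = xyq - x y^2 q^2 + x^2 y z q^2 *)
Definition num_FO2 : fps :=
  fps_add (mono 1 1 1 0 1) (fps_add (mono (-1) 1 2 0 2) (mono 1 2 1 1 2)).

(* denominator 1 - 2yq + (y^2 - x^2) q^2 + (1 - z) x^2 y q^3 *)
Definition den_FO2 : fps :=
  fps_add (mono 1 0 0 0 0)
  (fps_add (mono (-2) 0 1 0 1)
  (fps_add (mono 1 0 2 0 2)
  (fps_add (mono (-1) 2 0 0 2)
  (fps_add (mono 1 2 1 0 3) (mono (-1) 2 1 1 3))))).

(* Main.v *)
Require Import Defs.
From mathcomp Require Import all_boot all_order all_algebra.
From mathcomp Require Import zify.
From Stdlib Require Import FunctionalExtensionality.
Set Implicit Arguments. Unset Strict Implicit. Unset Printing Implicit Defensive.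
Import GRing.Theory Num.Theory.

Definition nes := num_even_sizes.

Fixpoint lgf (M : nat) (pm : nat -> seq (seq nat)) (l : nat) : seq (seq nat) :=
  if l is l'.+1 then map (cons M) (lgf M pm l' ++ pm l') else [::].

Fixpoint parts (m : nat) : nat -> seq (seq nat) :=
  if m is m'.+1 then fun l => parts m' l ++ lgf m (parts m') l
  else fun l => if l == 0 then [:: [::]] else [::].

Definition En (a l j : nat) : nat :=
  if a is m.+1 then count (fun s => nes s == j) (lgf a (parts m) l) else 0.
Definition Pn (m l j : nat) : nat := count (fun s => nes s == j) (parts m l).

Lemma nes_cons_in x s : x \in s -> nes (x :: s) = nes s.
Proof.
rewrite /nes /num_even_sizes /=; case: ifP => //= ox xs.
by rewrite mem_filter ox xs.
Qed.

Lemma nes_cons_notin x s : x \notin s -> nes (x :: s) = nes s + ~~ odd x.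
Proof.
rewrite /nes /num_even_sizes /=; case: ifP => //= ox xs; last by rewrite addn0.
by rewrite mem_filter ox (negbTE xs) /= addn1.
Qed.

Lemma mem_lgf M pm l s : s \in lgf M pm l -> M \in s.
Proof. by case: l => //= l /mapP [t _ ->]; rewrite mem_head. Qed.

Lemma lgf_all (P : pred nat) M pm l s : P M -> (forall l s, s \in pm l -> all P s) ->
  s \in lgf M pm l -> all P s.
Proof.
move=> PM Hpm; elim: l s => //= l IH s /mapP [t]; rewrite mem_cat => /orP [/IH|/Hpm] Ht ->;
  by rewrite /= PM.
Qed.

Lemma parts_le m l s : s \in parts m l -> all (fun x => x <= m) s.
Proof.
elim: m l s => [|m IH] l s /=.
  by case: (l == 0) => //; rewrite inE => /eqP ->.
rewrite mem_cat => /orP [/IH|].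
  by apply: sub_all => x /= h; apply: leqW.
by apply: lgf_all => // l' s' /IH; apply: sub_all => x /= h; apply: leqW.
Qed.

Lemma R1n m l j : Pn m.+1 l j = Pn m l j + En m.+1 l j.
Proof. by rewrite /Pn /= count_cat. Qed.

Lemma R2n m l j : En m.+1 l.+1 j = En m.+1 l j +
   (if odd m.+1 then Pn m l j else if j is j'.+1 then Pn m l j' else 0).
Proof.
rewrite /En /Pn /= count_map count_cat; congr (_ + _).
  by apply: eq_in_count => s /mem_lgf Hs /=; rewrite nes_cons_in.
have Hn : {in parts m l, forall s, nes (m.+1 :: s) = nes s + ~~ odd m.+1}.
  move=> s /parts_le Hs; apply: nes_cons_notin; apply/negP => /(allP Hs); by rewrite ltnn.
case: ifP => Ho.
  by apply: eq_in_count => s /Hn /= ->; rewrite Ho addn0.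
case: j => [|j].
  rewrite (eq_in_count (a2 := pred0)) ?count_pred0 // => s /Hn /= ->; by rewrite Ho addn1.
by apply: eq_in_count => s /Hn /= ->; rewrite Ho addn1 eqSS.
Qed.

Lemma P0n l j : Pn 0 l j = ((l == 0) && (j == 0)).
Proof. by rewrite /Pn /=; case: (l == 0) => //=; rewrite /nes /num_even_sizes /= eq_sym; case: (j == 0). Qed.

Lemma E0n l j : En 0 l j = 0. Proof. by []. Qed.
Lemma Enl0 a j : En a 0 j = 0. Proof. by case: a. Qed.

Definition Qp m l (s : seq nat) := [&& sorted geq s, all (fun k => 0 < k <= m) s & size s == l].

Lemma geq_trans' : transitive geq.
Proof. by move=> x y z /= h1 h2; apply: leq_trans h2 h1. Qed.

Lemma consI (M : nat) : injective (cons M).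
Proof. by move=> x y [].
Qed.

Lemma allA m s : m.+1 \notin s -> all (fun k => 0 < k <= m.+1) s = all (fun k => 0 < k <= m) s.
Proof.
elim: s => //= x s IH; rewrite inE negb_or => /andP [hx hs]; rewrite IH //.
by rewrite (leq_eqVlt x) ltnS eq_sym (negbTE hx).
Qed.

Lemma allB m s : all (fun k => 0 < k <= m) s -> m.+1 \notin s.
Proof. by move=> H; apply/negP => /(allP H) /=; rewrite ltnn ?andbF. Qed.

Lemma mem_lgfQ m (Hpm : forall l s, (s \in parts m l) = Qp m l s) l s :
  (s \in lgf m.+1 (parts m) l) = Qp m.+1 l s && (m.+1 \in s).
Proof.
elim: l s => [|l IH] [|h t] //=.
- by rewrite /Qp /= !andbF.
- by apply/negbTE/mapP => -[].
rewrite /Qp /= eqSS (path_sortedE geq_trans').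
case: (eqVneq h m.+1) => [->|hM].
  rewrite (mem_map (@consI m.+1)) mem_cat IH Hpm mem_head andbT /= leqnn /=.
  have gA : forall u, all (fun k => 0 < k <= m.+1) u -> all (geq m.+1) u.
    by move=> u; apply: sub_all => x /andP [].
  apply/idP/idP.
    case/orP => [/andP [/and3P [s a z] _] | /and3P [s a z]]; rewrite s z /= andbT.
      by rewrite a gA.
    have a' : all (fun k => 0 < k <= m.+1) t by apply: sub_all a => x /andP [-> /leqW].
    by rewrite a' gA.
  case/and3P => [/andP [g s] a z]; case Ht: (m.+1 \in t).
    by rewrite /Qp s a z.
  by rewrite andbF /= /Qp s z -(allA (negbT Ht)) a.
have -> : (h :: t \in [seq m.+1 :: x | x <- lgf m.+1 (parts m) l ++ parts m l]) = false.
  by apply/negbTE/mapP => -[x _ [Ehx _]]; move: hM; rewrite Ehx eqxx.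
apply/esym/negP => /andP [/and3P [/andP [A _] /andP [/andP [_ hm] _] _]].
rewrite inE eq_sym (negbTE hM) /= => Hin.
by move: (allP A _ Hin) => /= hle; move/negP: hM; apply; rewrite eqn_leq hm hle.
Qed.

Lemma mem_parts m l s : (s \in parts m l) = Qp m l s.
Proof.
elim: m l s => [|m IH] l s.
  case: s => [|h t].
    by rewrite /Qp /=; case: l.
  by rewrite /Qp /=; case: (l == 0); case: h => [|h]; rewrite ?inE /= ?andbF.
rewrite /= mem_cat IH (mem_lgfQ IH); case Hs: (m.+1 \in s).
  rewrite andbT; case Hq: (Qp m l s) => //=; by move: Hq => /and3P [_ /allB]; rewrite Hs.
by rewrite andbF orbF /Qp (allA (negbT Hs)).
Qed.

Lemma uniq_lgf (M : nat) (pm : nat -> seq (seq nat)) (l : nat) : (forall l, uniq (pm l)) -> (forall l s, s \in pm l -> M \notin s) ->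
  uniq (lgf M pm l).
Proof.
move=> Hu Hn; elim: l => //= l IH; rewrite (map_inj_uniq (@consI M)) cat_uniq IH Hu /= andbT.
apply/hasP => -[s /Hn sn /mem_lgf]; by rewrite (negbTE sn).
Qed.

Lemma uniq_parts m l : uniq (parts m l).
Proof.
elim: m l => [|m IH] l /=; first by case: (l == 0).
have Hn : forall l s, s \in parts m l -> m.+1 \notin s.
  by move=> l' s; rewrite mem_parts => /and3P [_ /allB].
rewrite cat_uniq IH uniq_lgf //= andbT.
by apply/hasP => -[s /mem_lgf Hs /Hn]; rewrite Hs.
Qed.

Lemma count_uniq_eq (T : eqType) (C : pred T) (s1 s2 : seq T) : uniq s1 -> uniq s2 ->
  (forall x, C x -> (x \in s1) = (x \in s2)) -> count C s1 = count C s2.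
Proof.
move=> u1 u2 H; rewrite -!size_filter; apply: perm_size; apply: uniq_perm; try exact: filter_uniq.
by move=> x; rewrite !mem_filter; case Cx: (C x) => //=; apply: H.
Qed.

Lemma max_le h t : all (geq h) t -> \max_(k <- t) k <= h.
Proof.
elim: t => [|x t IH] /=; first by rewrite big_nil.
by case/andP => hx ht; rewrite big_cons geq_max hx IH.
Qed.

Lemma largest_cons h t : sorted geq (h :: t) -> largest_part (h :: t) = h.
Proof.
rewrite /= (path_sortedE geq_trans') => /andP [A _].
by rewrite /largest_part big_cons; apply/maxn_idPl; apply: max_le.
Qed.

Lemma part_facts a x : is_partition x -> largest_part x = a.+1 ->
  [&& sorted geq x, all (fun k => 0 < k <= a.+1) x & a.+1 \in x].
Proof.
case: x => [|h t]; first by rewrite /largest_part big_nil.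
case/andP => S P; rewrite largest_cons // => Eh; rewrite -Eh S mem_head andbT /=.
move: S P; rewrite /= (path_sortedE geq_trans') => /andP [A _] /andP [_ P].
rewrite Eh ltn0Sn leqnn /=; apply/allP => k kt; by rewrite (allP P k kt) -Eh; exact: (allP A k kt).
Qed.

Lemma perim_eq a l x : is_partition x -> largest_part x = a.+1 -> size x = l ->
  perimeter x = a + l.
Proof. by move=> _ Lx Sz; rewrite /perimeter /num_parts Lx Sz addSn subn1. Qed.

Lemma FO2E a l j n : FO2 j a.+1 l n = if n == a + l then En a.+1 l j else 0.
Proof.
rewrite /FO2 cardE -deprecated_filter_index_enum size_filter.
pose C := fun s : seq nat => [&& is_partition s, largest_part s == a.+1, perimeter s == n
                                & num_even_sizes s == j].
pose f := fun t : l.-tuple 'I_a.+2 => map val (val t).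
have -> : count [pred t : l.-tuple 'I_a.+2 | let s := map val t in
      [&& is_partition s, largest_part s == a.+1, perimeter s == n
        & num_even_sizes s == j]] (index_enum _) = count C (map f (index_enum _)).
  by rewrite count_map.
have mem1 : forall x, (x \in map f (index_enum {:l.-tuple 'I_a.+2})) =
   (size x == l) && all (fun k => k < a.+2) x.
  move=> x; apply/idP/idP.
    case/mapP => t _ ->; rewrite /f size_map size_tuple eqxx /=.
    by apply/allP => k /mapP [i _ ->].
  case/andP => /eqP Hs Ha.
  have Hs' : size (map (@inord a.+1) x) == l by rewrite size_map Hs.
  apply/mapP; exists (Tuple Hs'); first by rewrite mem_index_enum.
  rewrite /f /= -map_comp map_id_in // => k kx /=; rewrite inordK //; exact: (allP Ha).
case: eqP => Hn.
  rewrite /En (@count_uniq_eq _ C _ (lgf a.+1 (parts a) l)).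
  - apply: eq_in_count => x; rewrite mem_lgfQ; last by move=> *; rewrite mem_parts.
    case/andP => /and3P [S A /eqP Sz] M.
    have iP : is_partition x by rewrite /is_partition S; apply: sub_all A => k /andP [].
    have Lx : largest_part x = a.+1.
      move: S A M; case: (x) => [|h t] // S A M; rewrite largest_cons //.
      move: S; rewrite /= (path_sortedE geq_trans') => /andP [G _].
      move: A => /andP [/andP [_ ha] _]; apply/eqP; rewrite eqn_leq ha /=.
      move: M; rewrite inE => /orP [/eqP -> //|/(allP G)] //.
    by rewrite /C iP Lx eqxx (perim_eq iP Lx Sz) Hn eqxx.
  - rewrite map_inj_uniq ?index_enum_uniq //.
    by move=> t1 t2 /(inj_map val_inj) /val_inj.
  - apply: uniq_lgf; first exact: uniq_parts.
    by move=> l' s; rewrite mem_parts => /and3P [_ /allB].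
  move=> x /and4P [iP /eqP Lx _ _]; rewrite mem1 mem_lgfQ; last by move=> *; rewrite mem_parts.
  case/and3P: (part_facts iP Lx) => S A M.
  rewrite /Qp S A M /= andbT; case: (size x == l) => //=.
  by apply/allP => k /(allP A) /andP [].
rewrite (eq_in_count (a2 := pred0)) ?count_pred0 // => x /[dup] xin; rewrite mem1 => /andP [/eqP Sz _].
apply/negbTE/negP => /and4P [iP /eqP Lx /eqP Pn _].
by apply: Hn; rewrite -Pn (perim_eq iP Lx Sz).
Qed.

Import Order.TTheory.
Local Open Scope ring_scope.

Definition Ez (a l j : int) : int :=
  if (0 <= a) && (0 <= l) && (0 <= j) then (En `|a| `|l| `|j|)%:Z else 0.
Definition Pz (a l j : int) : int :=
  if (0 <= a) && (0 <= l) && (0 <= j) then (Pn `|a| `|l| `|j|)%:Z else 0.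
Definition ep (M : int) : int := if odd `|M|%N then 0 else 1.

Lemma predz (n : nat) : (n.+1)%:Z - 1 = n%:Z.
Proof. by rewrite -[n.+1]addn1 PoszD addrK. Qed.

Lemma Ez_neg a l j : (a < 0) || (l < 0) || (j < 0) -> Ez a l j = 0.
Proof. rewrite /Ez; case: (lerP 0 a); case: (lerP 0 l); case: (lerP 0 j) => //. Qed.
Lemma Pz_neg a l j : (a < 0) || (l < 0) || (j < 0) -> Pz a l j = 0.
Proof. rewrite /Pz; case: (lerP 0 a); case: (lerP 0 l); case: (lerP 0 j) => //. Qed.

Lemma Ez_na a l j : a < 0 -> Ez a l j = 0. Proof. by move=> h; rewrite Ez_neg ?h. Qed.
Lemma Ez_nl a l j : l < 0 -> Ez a l j = 0. Proof. by move=> h; rewrite Ez_neg ?h ?orbT. Qed.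
Lemma Ez_nj a l j : j < 0 -> Ez a l j = 0. Proof. by move=> h; rewrite Ez_neg ?h ?orbT. Qed.
Lemma Pz_na a l j : a < 0 -> Pz a l j = 0. Proof. by move=> h; rewrite Pz_neg ?h. Qed.
Lemma Pz_nl a l j : l < 0 -> Pz a l j = 0. Proof. by move=> h; rewrite Pz_neg ?h ?orbT. Qed.
Lemma Pz_nj a l j : j < 0 -> Pz a l j = 0. Proof. by move=> h; rewrite Pz_neg ?h ?orbT. Qed.

Lemma Ez_nat (a l j : nat) : Ez a l j = (En a l j)%:Z. Proof. by []. Qed.
Lemma Pz_nat (a l j : nat) : Pz a l j = (Pn a l j)%:Z. Proof. by []. Qed.

Lemma Ez0 a l j : a <= 0 -> Ez a l j = 0.
Proof.
rewrite le_eqVlt => /orP [/eqP ->|h]; last by rewrite Ez_neg ?h.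
by rewrite /Ez; case: ifP.
Qed.

Lemma P0z l j : Pz 0 l j = if (l == 0) && (j == 0) then 1 else 0.
Proof.
case: l => [l|l]; case: j => [j|j]; rewrite /Pz /= ?andbF //.
have := P0n l j; rewrite /= => ->.
by case: l => [|l]; case: j.
Qed.

Lemma R1z (M l j : int) : 1 <= M -> Pz M l j = Pz (M - 1) l j + Ez M l j.
Proof.
case: M => [[|m]|m] //= _; rewrite predz.
case: l => [l|l]; case: j => [j|j] //; rewrite /Pz /Ez /= R1n; by rewrite PoszD.
Qed.

Lemma Ez_l0 (a l j : int) : l <= 0 -> Ez a l j = 0.
Proof.
rewrite le_eqVlt => /orP [/eqP ->|h]; last by rewrite Ez_neg ?h ?orbT.
by rewrite /Ez; case: ifP => // _; rewrite /= Enl0.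
Qed.

Lemma ep_ge0 M : 0 <= ep M. Proof. by rewrite /ep; case: ifP. Qed.

Lemma R2z (M l j : int) : 1 <= M ->
  Ez M l j = Ez M (l - 1) j + Pz (M - 1) (l - 1) (j - ep M).
Proof.
case: M => [[|m]|m] //= _; rewrite predz.
case: l => [[|l]|l].
- by rewrite !Ez_l0 ?Pz_nl //; lia.
- rewrite predz; case: j => [j|j]; last by rewrite !Ez_nj ?Pz_nj //; have := ep_ge0 m.+1; lia.
  rewrite !Ez_nat R2n PoszD; congr (_ + _); rewrite /ep /=.
  case: ifP => _; first by rewrite subr0.
  case: j => [|j] /=; first by rewrite Pz_nj.
  by rewrite predz.
- by rewrite !Ez_nl ?Pz_nl //; lia.
Qed.

Definition dl (a l j : int) : int := if (a == 0) && (l == 0) && (j == 0) then 1 else 0.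
Definition numz (a l j : int) : int := dl (a - 1) (l - 1) j - dl (a - 1) (l - 2) j + dl (a - 2) (l - 1) (j - 1).

Lemma dl_na a l j : a != 0 -> dl a l j = 0.
Proof. by rewrite /dl => /negbTE ->. Qed.
Lemma dl0 l j : dl 0 l j = Pz 0 l j.
Proof. by rewrite P0z /dl eqxx. Qed.

Lemma sub11 (x : int) : x - 1 - 1 = x - 2. Proof. lia. Qed.
Lemma sub21 (x : int) : x - 2 - 1 = x - 3. Proof. lia. Qed.
Lemma sub12 (x : int) : x - 1 - 2 = x - 3. Proof. lia. Qed.
Lemma sub22 (x : int) : x - 2 - 2 = x - 4. Proof. lia. Qed.

Lemma ep01 M : ep M = 0 \/ ep M = 1.
Proof. by rewrite /ep; case: ifP; [left|right]. Qed.

Lemma ep_m2 (M : int) : 2 <= M -> ep (M - 2) = ep M.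
Proof.
case: M => [[|[|m]]|m] //= _.
have -> : (m.+2 : int) - 2 = m by rewrite -[m.+2]addn2 PoszD addrK.
by rewrite /ep /= negbK.
Qed.

Lemma ep_m1 (M : int) : 1 <= M -> ep (M - 1) = 1 - ep M.
Proof.
case: M => [[|m]|m] //= _; rewrite predz /ep /=.
by case: (odd m).
Qed.

Ltac gen_atoms :=
  repeat match goal with
  | |- context [Ez ?a ?b ?c] => let x := fresh "x" in set x := Ez a b c; clearbody x
  | |- context [Pz ?a ?b ?c] => let x := fresh "x" in set x := Pz a b c; clearbody x
  end.

Lemma EzMain (a l j : int) :
  Ez a l j - 2 * Ez a (l - 1) j + Ez a (l - 2) j - Ez (a - 2) l j
   + Ez (a - 2) (l - 1) j - Ez (a - 2) (l - 1) (j - 1) = numz a l j.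
Proof.
have o11 : (1:int) <= 1 by lia.
have o12 : (1:int) <= 2 by lia.
have [ha|ha] : a <= 0 \/ 0 < a by lia.
  rewrite /numz !Ez0 ?dl_na //; gen_atoms; lia.
have [ha1|ha1] : a = 1 \/ 1 < a by lia.
  subst a; rewrite /numz !(@Ez0 (1 - 2)) // (@dl_na (1 - 2)) // subrr !dl0.
  have := @R2z 1 l j o11; have := @R2z 1 (l - 1) j o11.
  rewrite /ep /= subrr subr0 sub11; gen_atoms; lia.
have [ha2|ha2] : a = 2 \/ 2 < a by lia.
  subst a; rewrite /numz !(@Ez0 (2 - 2)) // (@dl_na (2 - 1)) // subrr !dl0.
  have := @R2z 2 l j o12; have := @R2z 2 (l - 1) j o12.
  have := @R1z 1 (l - 1) (j - 1) o11; have := @R1z 1 (l - 2) (j - 1) o11.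
  have := @R2z 1 (l - 1) (j - 1) o11.
  have -> : (2 : int) - 1 = 1 by [].
  rewrite /ep /= subrr subr0 sub11; gen_atoms; lia.
rewrite /numz !dl_na; try lia.
have oa : 1 <= a by lia.
have oa1 : 1 <= a - 1 by lia.
have oa2 : 1 <= a - 2 by lia.
have H1 := @R2z (a) l j oa.
have H2 := @R2z (a) (l - 1) j oa.
have H3 := @R1z (a - 1) (l - 1) (j - ep a) oa1.
have H4 := @R1z (a - 1) (l - 2) (j - ep a) oa1.
have H5 := @R1z (a - 2) (l - 1) (j - ep a) oa2.
have H6 := @R1z (a - 2) (l - 2) (j - ep a) oa2.
have H7 := @R2z (a - 1) (l - 1) (j - ep a) oa1.
have H8 := @R1z (a - 2) (l - 2) (j - 1) oa2.
have H9 := @R2z (a - 2) l j oa2.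
have H10 := @R2z (a - 2) (l - 1) j oa2.
have H11 := @R2z (a - 2) (l - 1) (j - 1) oa2.
have E1 := ep_m1 oa.
have o2 : 2 <= a by lia.
have E2 := ep_m2 o2.
move: H1 H2 H3 H4 H5 H6 H7 H8 H9 H10 H11.
rewrite ?sub11 ?sub21 ?sub12 ?sub22 E1 E2.
case: (ep01 a) => ->; rewrite ?subr0 ?subrr ?sub11 ?sub21 ?sub12 ?sub22 ?subr0; gen_atoms; clear; lia.
Qed.

Fixpoint Df (f : nat) (a l j : int) : int :=
  if f is f'.+1 then
    (if (a < 0) || (l < 0) || (j < 0) then 0 else
     dl a l j + 2 * Df f' a (l - 1) j - Df f' a (l - 2) j + Df f' (a - 2) l j
       - Df f' (a - 2) (l - 1) j + Df f' (a - 2) (l - 1) (j - 1))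
  else 0.

Definition Dz (a l j : int) : int := Df (absz (a + l)).+1 a l j.

Lemma Df_neg f a l j : (a < 0) \/ (l < 0) \/ (j < 0) -> Df f a l j = 0.
Proof.
case: f => //= f h; case: ifP => // /negbT; rewrite !negb_or -!leNgt.
case/andP => [/andP [h1 h2] h3]; lia.
Qed.

Lemma Df_fuel f : forall f' a l j, a + l < f%:Z -> a + l < f'%:Z -> Df f a l j = Df f' a l j.
Proof.
elim: f => [|f IH] f' a l j h1 h2.
  by rewrite !Df_neg; lia.
case: f' h2 => [|f'] h2.
  by rewrite !Df_neg; lia.
have IH' : forall x y z, x + y < a + l -> Df f x y z = Df f' x y z.
  move=> x y z hxy.
  have [hn|hn] : (x < 0) \/ (y < 0) \/ (z < 0) \/ (0 <= x /\ 0 <= y) by lia.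
    by rewrite !Df_neg; lia.
  case: hn => [|[]] hn; try by rewrite !Df_neg; lia.
  apply: IH; lia.
rewrite /=; case: ifP => // /negbT; rewrite !negb_or -!leNgt => /andP [/andP [ha hl] hj].
rewrite !(IH' a) ?(IH' (a - 2)) //; lia.
Qed.

Lemma absS (w : int) : 0 <= w -> ((absz w).+1)%:Z = w + 1.
Proof. by move=> h; rewrite -addn1 PoszD gez0_abs. Qed.

Lemma Dz_eq f x y z : x + y < f%:Z -> Df f x y z = Dz x y z.
Proof.
move=> h; rewrite /Dz.
have [hn|hn] : (x < 0) \/ (y < 0) \/ (z < 0) \/ (0 <= x /\ 0 <= y) by lia.
  by rewrite !Df_neg; lia.
case: hn => [|[]] hn; try by rewrite !Df_neg; lia.
apply: Df_fuel => //; rewrite absS; lia.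
Qed.

Lemma Dz_neg a l j : (a < 0) \/ (l < 0) \/ (j < 0) -> Dz a l j = 0.
Proof. exact: Df_neg. Qed.

Lemma dl_neg a l j : (a < 0) \/ (l < 0) \/ (j < 0) -> dl a l j = 0.
Proof.
rewrite /dl => h; case: ifP => // /andP [/andP [/eqP h1 /eqP h2] /eqP h3]; lia.
Qed.

Ltac gen_atomsD :=
  repeat match goal with
  | |- context [Dz ?a ?b ?c] => let x := fresh "x" in set x := Dz a b c; clearbody x
  | |- context [dl ?a ?b ?c] => let x := fresh "x" in set x := dl a b c; clearbody x
  end.

Lemma Drec (a l j : int) :
  Dz a l j - 2 * Dz a (l - 1) j + Dz a (l - 2) j - Dz (a - 2) l j
   + Dz (a - 2) (l - 1) j - Dz (a - 2) (l - 1) (j - 1) = dl a l j.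
Proof.
have [hn|hn] : (a < 0 \/ l < 0 \/ j < 0) \/ (0 <= a /\ 0 <= l /\ 0 <= j) by lia.
  by rewrite !Dz_neg ?dl_neg; lia.
case: hn => [ha [hl hj]].
have -> : Dz a l j = dl a l j + 2 * Dz a (l - 1) j - Dz a (l - 2) j + Dz (a - 2) l j
       - Dz (a - 2) (l - 1) j + Dz (a - 2) (l - 1) (j - 1).
  rewrite {1}/Dz /=; case: ifP => [/orP [/orP []|] h|_]; try lia.
  rewrite !Dz_eq //; by rewrite gez0_abs; lia.
gen_atomsD; clear; lia.
Qed.

Definition K (a l j : int) : int :=
  Dz (a - 1) (l - 1) j - Dz (a - 1) (l - 2) j + Dz (a - 2) (l - 1) (j - 1).

Lemma Krec (a l j : int) :
  K a l j - 2 * K a (l - 1) j + K a (l - 2) j - K (a - 2) l j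
   + K (a - 2) (l - 1) j - K (a - 2) (l - 1) (j - 1) = numz a l j.
Proof.
have H1 := Drec (a - 1) (l - 1) j.
have H2 := Drec (a - 1) (l - 2) j.
have H3 := Drec (a - 2) (l - 1) (j - 1).
move: H1 H2 H3; rewrite /numz /K ?sub11 ?sub21 ?sub12 ?sub22.
gen_atomsD; clear; lia.
Qed.

Ltac gen_atomsK :=
  repeat match goal with
  | |- context [Ez ?a ?b ?c] => let x := fresh "x" in set x := Ez a b c; clearbody x
  | |- context [K ?a ?b ?c] => let x := fresh "x" in set x := K a b c; clearbody x
  | |- context [numz ?a ?b ?c] => let x := fresh "x" in set x := numz a b c; clearbody x
  end.

Lemma K_neg a l j : (a < 0) \/ (l < 0) -> K a l j = 0.
Proof. by move=> h; rewrite /K !Dz_neg; lia. Qed.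

Lemma EzK_aux n : forall a l j, a + l < n%:Z -> Ez a l j = K a l j.
Proof.
elim: n => [|n IH] a l j h.
  have [h'|h'] : a < 0 \/ l < 0 by lia.
    by rewrite Ez_na // K_neg //; left.
  by rewrite Ez_nl // K_neg //; right.
have [h'|h'] : (a < 0 \/ l < 0) \/ (0 <= a /\ 0 <= l) by lia.
  case: h' => h'; first by rewrite Ez_na // K_neg //; left.
  by rewrite Ez_nl // K_neg //; right.
have E1 := EzMain a l j; have E2 := Krec a l j.
have IH' : forall x y z, x + y < a + l -> Ez x y z = K x y z.
  move=> x y z hxy.
  have [h''|h''] : (x < 0 \/ y < 0) \/ (0 <= x /\ 0 <= y) by lia.
    case: h'' => h''; first by rewrite Ez_na // K_neg //; left.
    by rewrite Ez_nl // K_neg //; right.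
  apply: IH; lia.
rewrite (IH' a (l - 1)) ?(IH' a (l - 2)) ?(IH' (a - 2) l) ?(IH' (a - 2) (l - 1)) in E1; try lia.
move: E1 E2; gen_atomsK; clear; lia.
Qed.

Lemma EzK a l j : Ez a l j = K a l j.
Proof.
have [h|h] : (a < 0 \/ l < 0) \/ (0 <= a /\ 0 <= l) by lia.
  case: h => h; first by rewrite Ez_na // K_neg //; left.
  by rewrite Ez_nl // K_neg //; right.
apply: (@EzK_aux (absz (a + l)).+1); rewrite absS; lia.
Qed.

Lemma sum1 (N i : nat) (G : nat -> int) :
  \sum_(x < N.+1) (if x == i :> nat then G x else 0) = if (i <= N)%N then G i else 0.
Proof. by rewrite -big_mkcond big_ord1_eq ltnS. Qed.

Lemma sum2 (N M i k : nat) (G : nat -> nat -> int) :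
  \sum_(x < N.+1) \sum_(y < M.+1) (if (x == i :> nat) && (y == k :> nat) then G x y else 0)
  = if (i <= N)%N && (k <= M)%N then G i k else 0.
Proof.
rewrite (eq_bigr (fun x : 'I_N.+1 => if x == i :> nat then (if (k <= M)%N then G i k else 0) else 0)).
  by rewrite (sum1 _ _ (fun _ => if (k <= M)%N then G i k else 0)); case: (i <= N)%N.
move=> x _; case: eqP => [->|_] /=; first by rewrite (sum1 _ _ (G i)).
by rewrite big1.
Qed.

Lemma sum3 (N M L i k m : nat) (G : nat -> nat -> nat -> int) :
  \sum_(x < N.+1) \sum_(y < M.+1) \sum_(z < L.+1)
     (if [&& x == i :> nat, y == k :> nat & z == m :> nat] then G x y z else 0)
  = if [&& (i <= N)%N, (k <= M)%N & (m <= L)%N] then G i k m else 0.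
Proof.
rewrite (eq_bigr (fun x : 'I_N.+1 => if x == i :> nat then (if (k <= M)%N && (m <= L)%N then G i k m else 0) else 0)).
  by rewrite (sum1 _ _ (fun _ => if (k <= M)%N && (m <= L)%N then G i k m else 0)); case: (i <= N)%N.
move=> x _; case: eqP => [->|_] /=; first by rewrite (sum2 _ _ _ _ (G i)).
by rewrite big1 // => y _; rewrite big1.
Qed.

Lemma sum4 (N M L P i k m p : nat) (G : nat -> nat -> nat -> nat -> int) :
  \sum_(x < N.+1) \sum_(y < M.+1) \sum_(z < L.+1) \sum_(w < P.+1)
     (if [&& x == i :> nat, y == k :> nat, z == m :> nat & w == p :> nat] then G x y z w else 0)
  = if [&& (i <= N)%N, (k <= M)%N, (m <= L)%N & (p <= P)%N] then G i k m p else 0.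
Proof.
rewrite (eq_bigr (fun x : 'I_N.+1 => if x == i :> nat then
   (if [&& (k <= M)%N, (m <= L)%N & (p <= P)%N] then G i k m p else 0) else 0)).
  by rewrite (sum1 _ _ (fun _ => if [&& (k <= M)%N, (m <= L)%N & (p <= P)%N] then G i k m p else 0)); case: (i <= N)%N.
move=> x _; case: eqP => [->|_] /=; first by rewrite (sum3 _ _ _ _ _ _ (G i)).
by rewrite big1 // => y _; rewrite big1 // => z _; rewrite big1.
Qed.

Lemma mulmono e i k m p (g : fps) a b c d :
  fps_mul (mono e i k m p) g a b c d =
  if [&& (i <= a)%N, (k <= b)%N, (m <= c)%N & (p <= d)%N]
  then e * g (a - i)%N (b - k)%N (c - m)%N (d - p)%N else 0.
Proof.
rewrite /fps_mul /mono.
rewrite -(sum4 _ _ _ _ _ _ _ _ (fun x y z w => e * g (a - x)%N (b - y)%N (c - z)%N (d - w)%N)).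
apply: eq_bigr => x _; apply: eq_bigr => y _; apply: eq_bigr => z _; apply: eq_bigr => w _.
by case: ifP; rewrite ?mul0r.
Qed.

Lemma mulDl_fps f g h a b c d :
  fps_mul (fps_add f g) h a b c d = fps_mul f h a b c d + fps_mul g h a b c d.
Proof.
rewrite /fps_mul -big_split; apply: eq_bigr => x _; rewrite -big_split; apply: eq_bigr => y _.
rewrite -big_split; apply: eq_bigr => z _; rewrite -big_split; apply: eq_bigr => w _.
by rewrite /fps_add mulrDl.
Qed.

Definition liftf (o : nat) (F : int -> int -> int -> int) : fps :=
  fun a l j n => if (n + o == a + l)%N then F a%:Z l%:Z j%:Z else 0.

Lemma mulmono_lift (F : int -> int -> int -> int) (o o' : nat) e i k m p a l j n :
  (forall x y z : int, x < 0 \/ y < 0 \/ z < 0 \/ x + y < o%:Z -> F x y z = 0) ->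
  (p + o' = i + k + o)%N ->
  fps_mul (mono e i k m p) (liftf o F) a l j n =
  if (n + o' == a + l)%N then e * F (a%:Z - i%:Z) (l%:Z - k%:Z) (j%:Z - m%:Z) else 0.
Proof.
move=> HF Hp; rewrite mulmono /liftf.
case: ifP => [/and4P [h1 h2 h3 h4]|hg].
  rewrite -!subzn //.
  have -> : ((n - p + o == a - i + (l - k))%N) = ((n + o' == a + l)%N).
    by apply/eqP/eqP; lia.
  by case: ifP; rewrite ?mulr0.
case: ifP => // /eqP hc.
have Hn : ~ [/\ (i <= a)%N, (k <= l)%N, (m <= j)%N & (p <= n)%N].
  by move=> [h1 h2 h3 h4]; rewrite h1 h2 h3 h4 in hg.
rewrite HF ?mulr0 //; lia.
Qed.

Lemma Gpt a l j n : FO2_gf a l j n = if (n + 1 == a + l)%N then Ez a l j else 0.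
Proof.
rewrite /FO2_gf Ez_nat.
case: a => [|a]; first by rewrite /=; case: ifP.
case: l => [|l]; first by rewrite Enl0 /=; case: ifP.
case: n => [|n].
  by rewrite /=; case: ifP => // /eqP; lia.
rewrite [in LHS]/= FO2E.
have -> : (n.+1 + 1 == a.+1 + l.+1)%N = (n.+1 == a + l.+1)%N by apply/eqP/eqP; lia.
by case: ifP.
Qed.

Lemma HD : forall x y z : int, x < 0 \/ y < 0 \/ z < 0 \/ x + y < (0%N)%:Z -> Dz x y z = 0.
Proof. by move=> x y z h; apply: Dz_neg; lia. Qed.

Theorem mainTheorem3 :
  exists den_inv : fps,
    fps_mul den_FO2 den_inv = fps_one /\
    FO2_gf = fps_mul num_FO2 den_inv.
Proof.
exists (liftf 0 Dz); split.
  apply: functional_extensionality => a; apply: functional_extensionality => l.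
  apply: functional_extensionality => j; apply: functional_extensionality => n.
  rewrite /den_FO2 !mulDl_fps.
  rewrite !(fun e i k m p => @mulmono_lift Dz 0 0 e i k m p a l j n HD) //.
  rewrite /fps_one /mono.
  rewrite !addn0; case: (eqVneq n (a + l)%N) => H.
    rewrite H.
    have Hd : dl a l j = if [&& a == 0, l == 0, j == 0 & (a + l) == 0]%N then 1 else 0.
      rewrite /dl.
      by clear H; case: a => [|a]; case: l => [|l]; case: j => [|j].
    rewrite -Hd -(Drec a l j) !subr0.
    gen_atomsD; clear; lia.
  rewrite !addr0.
  case: ifP => // /and4P [/eqP ha /eqP hl _ /eqP hn].
  by move: H; rewrite ha hl hn.
apply: functional_extensionality => a; apply: functional_extensionality => l.
apply: functional_extensionality => j; apply: functional_extensionality => n.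
rewrite Gpt /num_FO2 !mulDl_fps.
rewrite !(fun e i k m p => @mulmono_lift Dz 0 1 e i k m p a l j n HD) //.
case: ifP => _; last by rewrite !addr0.
rewrite EzK /K !subr0; gen_atomsD; clear; lia.
Qed.
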